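(* For $\beta>0$ and every positive integer $m$, \[ \mathbb{E}\Big[\sum_{v\in V(G^n_{m,\beta})}\binom{d(v)}{2}\Big]=\left(\frac{2+5\beta}{2\beta}m^2+\frac{2-\beta}{2\beta}m\right)n+O\!\left(n^{2/(2+\beta)}\right)\qquad(n\to\infty), \] where $d(v)$ is the degree of $v$ in $G^n_{m,\beta}$.
   Context: Fix a real $\beta>0$ and a positive integer $m$. The random tree process $(G^n_{1,\beta})_{n\ge1}$ is defined as follows. $G^1_{1,\beta}$ consists of a single vertex $v_1$ and no edges. Given $G^n_{1,\beta}$ with vertices $v_1,\dots,v_n$ and directed edges $e_2,\dots,e_n$ (where $e_i$ is the edge whose tail is $v_i$), $G^{n+1}_{1,\beta}$ is obtained by adding a vertex $v_{n+1}$ and a directed edge $e_{n+1}$ with tail $v_{n+1}$ and head a ''target vertex'' determined by a random variable $f_{n+1}$, independent of $f_2,\dots,f_n$, taking values in $\Omega_{n+1}=\{(i,v):1\le i\le n\}\cup\{(i,h),(i,t):2\le i\le n\}$ with $\Pr(f_{n+1}=(i,v))=\beta/((2+\beta)n-2)$ and $\Pr(f_{n+1}=(i,h))=\Pr(f_{n+1}=(i,t))=1/((2+\beta)n-2)$. If $f_{n+1}=(i,v)$ the target is $v_i$ (chosen ''uniformly''); if $f_{n+1}=(i,h)$ the target is the head of $e_i$, and if $f_{n+1}=(i,t)$ the target is the tail $v_i$ of $e_i$ (chosen ''preferentially'', by copying the head half-edge, resp. tail half-edge, of $e_i$). Consequently the target is $v_i$ with probability $(d_n(v_i)+\beta)/((2+\beta)n-2)$,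 where $d_n(v)$ is the degree of $v$ in $G^n_{1,\beta}$. Each edge is regarded as two half-edges, one at each endpoint; the degree of a vertex is the number of half-edges at it (loops count twice). For $n\ge1$, $G^n_{m,\beta}$ is the undirected multigraph obtained from $G^{nm}_{1,\beta}$ by identifying, for each $j=1,\dots,n$, the vertices $v_{(j-1)m+1},\dots,v_{jm}$ into a single vertex $w_j$, keeping all edges (so loops and multiple edges may occur). Thus $\sum_v\binom{d(v)}{2}$ equals the number of unordered pairs of distinct half-edges with a common endpoint. *)

(* Defs.v *)
From Stdlib Require Import Reals Lra Lia Arith List Bool.
Import ListNotations.
Open Scope R_scope.

(* A realisation of G^N_{1,beta} is encoded by the list hs of heads:
   nth (i-2) hs = index of the head of edge e_i (tail v_i), i = 2..N.
   A distribution is a list of (probability weight, realisation). *)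

(* One step: from G^n_{1,beta} (list of n-1 heads) to G^{n+1}_{1,beta},
   enumerating Omega_{n+1} = {(i,v) : 1<=i<=n} u {(i,h),(i,t) : 2<=i<=n}. *)
Definition step (beta : R) (n : nat) (st : R * list nat) : list (R * list nat) :=
  let (w, hs) := st in
  let D := (2 + beta) * INR n - 2 in
     map (fun i => (w * (beta / D), hs ++ [i])) (seq 1 n)
  ++ map (fun i => (w * (1 / D), hs ++ [nth (i - 2) hs 0%nat])) (seq 2 (n - 1))
  ++ map (fun i => (w * (1 / D), hs ++ [i])) (seq 2 (n - 1)).

Fixpoint dist (beta : R) (n : nat) : list (R * list nat) :=
  match n with
  | O => [(1, [])]
  | S O => [(1, [])]
  | S k => flat_map (step beta k) (dist beta k)
  end.

Definition deg1 (hs : list nat) (x : nat) : nat :=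
  ((if (2 <=? x)%nat && (x <=? length hs + 1)%nat then 1 else 0)
   + count_occ Nat.eq_dec hs x)%nat.

(* Degree of w_j in G^n_{m,beta}: sum of degrees of v_{(j-1)m+1}, ..., v_{jm}. *)
Definition degm (m : nat) (hs : list nat) (j : nat) : nat :=
  fold_right Nat.add 0%nat (map (deg1 hs) (seq ((j - 1) * m + 1) m)).

Definition binom2 (d : nat) : nat := (d * (d - 1) / 2)%nat.

Definition pair_count (m n : nat) (hs : list nat) : nat :=
  fold_right Nat.add 0%nat (map (fun j => binom2 (degm m hs j)) (seq 1 n)).

Definition expected_pairs (beta : R) (m n : nat) : R :=
  fold_right (fun p acc => fst p * INR (pair_count m n (snd p)) + acc) 0
             (dist beta (n * m)).

(* Main.v *)
Require Import Defs.
From Stdlib Require Import Reals Lra Lia Arith List Bool Psatz.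
Import ListNotations.
Open Scope R_scope.


Definition sm (l : list nat) (f : nat -> R) : R := fold_right (fun x acc => f x + acc) 0 l.

Lemma sm_cons a l f : sm (a::l) f = f a + sm l f.
Proof. reflexivity. Qed.
Lemma sm_app l1 l2 f : sm (l1++l2) f = sm l1 f + sm l2 f.
Proof. induction l1; simpl; [ring|]. unfold sm in *; simpl; rewrite IHl1; ring. Qed.
Lemma sm_ext l f g : (forall x, In x l -> f x = g x) -> sm l f = sm l g.
Proof. induction l; intros H; simpl; auto. unfold sm in *; simpl. rewrite H by (left; auto). rewrite IHl; auto. intros; apply H; right; auto. Qed.
Lemma sm_plus l f g : sm l (fun x => f x + g x) = sm l f + sm l g.
Proof. induction l; unfold sm in *; simpl; [ring|]. rewrite IHl; ring. Qed.
Lemma sm_scal l c f : sm l (fun x => c * f x) = c * sm l f.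
Proof. induction l; unfold sm in *; simpl; [ring|]. rewrite IHl; ring. Qed.
Lemma sm_const l c : sm l (fun _ => c) = INR (length l) * c.
Proof. induction l; [simpl; unfold sm; simpl; ring|]. rewrite sm_cons, IHl. change (length (a::l)) with (S (length l)). rewrite S_INR; ring. Qed.
Lemma sm_swap l1 l2 F : sm l1 (fun x => sm l2 (fun y => F x y)) = sm l2 (fun y => sm l1 (fun x => F x y)).
Proof.
  induction l1.
  - unfold sm; simpl. induction l2; simpl; auto. rewrite <- IHl2; ring.
  - rewrite sm_cons, IHl1. rewrite <- sm_plus. reflexivity.
Qed.
Lemma sm_map {A} (h : A -> nat) (l : list A) f :
  sm (map h l) f = fold_right (fun x acc => f (h x) + acc) 0 l.
Proof. induction l; simpl; auto. rewrite <- IHl; reflexivity. Qed.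

Definition del (y a : nat) : R := if Nat.eqb y a then 1 else 0.

Lemma sm_delta l a g : NoDup l -> In a l -> sm l (fun y => del y a * g y) = g a.
Proof.
  induction l as [|b l IHl]; intros Hn Hi; [destruct Hi|].
  inversion Hn; subst. rewrite sm_cons. unfold del at 1.
  destruct Hi as [->|Hi].
  - rewrite Nat.eqb_refl. rewrite (sm_ext _ _ (fun _ => 0)).
    + rewrite sm_const; ring.
    + intros x Hx. unfold del. destruct (Nat.eqb_spec x a); [subst; contradiction|ring].
  - destruct (Nat.eqb_spec b a); [subst; contradiction|]. rewrite IHl; auto; ring.
Qed.

Lemma sm_delta0 l a g : ~ In a l -> sm l (fun y => del y a * g y) = 0.
Proof.
  intros H. rewrite (sm_ext _ _ (fun _ => 0)). rewrite sm_const; ring.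
  intros x Hx. unfold del. destruct (Nat.eqb_spec x a); [subst; contradiction|ring].
Qed.

Lemma INR_count_cons (y : nat) l x :
  INR (count_occ Nat.eq_dec (y::l) x) = del x y + INR (count_occ Nat.eq_dec l x).
Proof.
  simpl. unfold del. destruct (Nat.eq_dec y x); destruct (Nat.eqb_spec x y); subst; try congruence.
  rewrite S_INR; ring. ring.
Qed.

Lemma sm_count l L g : NoDup L -> (forall y, In y l -> In y L) ->
  sm l g = sm L (fun x => INR (count_occ Nat.eq_dec l x) * g x).
Proof.
  intros HL. induction l; intros Hin.
  - simpl. rewrite (sm_ext _ _ (fun _ => 0)). rewrite sm_const; ring. intros; simpl; ring.
  - rewrite sm_cons. rewrite IHl by (intros; apply Hin; right; auto).
    rewrite (sm_ext L (fun x => INR (count_occ Nat.eq_dec (a :: l) x) * g x) (fun x => del x a * g x + INR (count_occ Nat.eq_dec l x) * g x)).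
    + rewrite sm_plus, sm_delta; auto. apply Hin; left; auto.
    + intros x _. rewrite INR_count_cons. ring.
Qed.

Lemma INR_fold l (g : nat -> nat) : INR (fold_right Nat.add 0%nat (map g l)) = sm l (fun x => INR (g x)).
Proof. induction l; simpl; auto. rewrite plus_INR, IHl; reflexivity. Qed.

Definition Ex (l : list (R * list nat)) (f : list nat -> R) : R :=
  fold_right (fun p acc => fst p * f (snd p) + acc) 0 l.

Lemma Ex_app l1 l2 f : Ex (l1++l2) f = Ex l1 f + Ex l2 f.
Proof. induction l1; simpl; [ring|]. unfold Ex in *; simpl; rewrite IHl1; ring. Qed.
Lemma Ex_ext l f g : (forall p, In p l -> f (snd p) = g (snd p)) -> Ex l f = Ex l g.
Proof. induction l; intros H; simpl; auto. unfold Ex in *; simpl. rewrite H by (left; auto). rewrite IHl; auto. intros; apply H; right; auto. Qed.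
Lemma Ex_lin l a b c f g : Ex l (fun h => a * f h + b * g h + c) = a * Ex l f + b * Ex l g + c * Ex l (fun _ => 1).
Proof. induction l; unfold Ex in *; simpl; [ring|]. rewrite IHl; ring. Qed.
Lemma Ex_flat l G f F : (forall p, Ex (G p) f = fst p * F (snd p)) -> Ex (flat_map G l) f = Ex l F.
Proof. intros H. induction l; simpl; auto. rewrite Ex_app, H, IHl. reflexivity. Qed.
Lemma Ex_map (l : list nat) w (a : nat -> R) (G : nat -> list nat) f :
  Ex (map (fun i => (w * a i, G i)) l) f = w * sm l (fun i => a i * f (G i)).
Proof. induction l; [unfold Ex, sm; simpl; ring|]. unfold Ex in *; simpl map; simpl fold_right; rewrite IHl; rewrite sm_cons; simpl; ring. Qed.

Definition Dt (beta : R) (t : nat) : R := (2 + beta) * INR t - 2.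

Definition Tk (beta : R) (t : nat) (hs : list nat) (f : list nat -> R) : R :=
  sm (seq 1 t) (fun i => beta / Dt beta t * f (hs ++ [i]))
  + sm (seq 2 (t - 1)) (fun i => 1 / Dt beta t * f (hs ++ [nth (i - 2) hs 0%nat]))
  + sm (seq 2 (t - 1)) (fun i => 1 / Dt beta t * f (hs ++ [i])).

Lemma Ex_step beta t w hs f : Ex (step beta t (w, hs)) f = w * Tk beta t hs f.
Proof.
  unfold step, Tk, Dt. rewrite !Ex_app.
  rewrite (Ex_map _ w (fun _ => beta / ((2 + beta) * INR t - 2)) (fun i => hs ++ [i])).
  rewrite (Ex_map _ w (fun _ => 1 / ((2 + beta) * INR t - 2)) (fun i => hs ++ [nth (i-2) hs 0%nat])).
  rewrite (Ex_map _ w (fun _ => 1 / ((2 + beta) * INR t - 2)) (fun i => hs ++ [i])).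
  ring.
Qed.

Lemma dist_step beta t f : (1 <= t)%nat -> Ex (Defs.dist beta (S t)) f = Ex (Defs.dist beta t) (fun hs => Tk beta t hs f).
Proof.
  intros Ht. destruct t as [|t']; [lia|].
  change (Defs.dist beta (S (S t'))) with (flat_map (step beta (S t')) (Defs.dist beta (S t'))).
  apply Ex_flat. intros [w hs]. apply Ex_step.
Qed.


Definition valid (t : nat) (hs : list nat) : Prop :=
  length hs = (t - 1)%nat /\ Forall (fun y => (1 <= y <= t)%nat) hs.

Lemma map_nth_shift : forall (l : list nat) k, map (fun i => nth (i - k) l 0%nat) (seq k (length l)) = l.
Proof.
  induction l as [|a l IH]; intros k; simpl; auto.
  rewrite Nat.sub_diag. f_equal.
  rewrite <- (IH (S k)) at 2. apply map_ext_in. intros i Hi. apply in_seq in Hi.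
  replace (i - k)%nat with (S (i - S k)) by lia. reflexivity.
Qed.

Lemma Dt_pos beta t : 0 < beta -> (1 <= t)%nat -> 0 < Dt beta t.
Proof. intros Hb Ht. unfold Dt. apply le_INR in Ht. simpl in Ht. nra. Qed.

Lemma dist_valid beta t p : (1 <= t)%nat -> In p (Defs.dist beta t) -> valid t (snd p).
Proof.
  intros Ht. revert p. induction t as [|t IH]; [lia|]. intros p.
  destruct t as [|t'].
  - simpl. intros [<-|[]]. split; simpl; auto.
  - change (Defs.dist beta (S (S t'))) with (flat_map (step beta (S t')) (Defs.dist beta (S t'))).
    intros Hp. apply in_flat_map in Hp. destruct Hp as [[w hs] [Hin Hp]].
    specialize (IH ltac:(lia) _ Hin). simpl in IH. destruct IH as [Hl Hf].
    unfold step in Hp. apply in_app_iff in Hp.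
    assert (Hw : Forall (fun y => (1 <= y <= S (S t'))%nat) hs).
    { eapply Forall_impl; [|exact Hf]. simpl; intros; lia. }
    destruct Hp as [Hp|Hp]; [|apply in_app_iff in Hp; destruct Hp as [Hp|Hp]];
      apply in_map_iff in Hp; destruct Hp as [i [<- Hi]]; apply in_seq in Hi; simpl;
      (split; [rewrite length_app; simpl; lia| apply Forall_app; split; auto; constructor; auto]).
    + lia.
    + assert (In (nth (i-2) hs 0%nat) hs) by (apply nth_In; lia).
      rewrite Forall_forall in Hw. apply Hw; auto.
    + lia.
Qed.

Lemma Tk_one beta t hs : 0 < beta -> (1 <= t)%nat -> Tk beta t hs (fun _ => 1) = 1.
Proof.
  intros Hb Ht. unfold Tk. rewrite !sm_const, !length_seq.
  pose proof (Dt_pos beta t Hb Ht). rewrite minus_INR by lia. unfold Dt in *. simpl. field. lra.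
Qed.

Lemma dist_weight beta t : 0 < beta -> (1 <= t)%nat -> Ex (Defs.dist beta t) (fun _ => 1) = 1.
Proof.
  intros Hb Ht. induction t as [|t IH]; [lia|].
  destruct t as [|t']. - simpl. unfold Ex; simpl; ring.
  - rewrite dist_step by lia. rewrite (Ex_ext _ _ (fun _ => 1)). apply IH; lia.
    intros; apply Tk_one; auto; lia.
Qed.

Definition d (hs : list nat) (x : nat) : R := INR (deg1 hs x).
Definition tlI (t x : nat) : R := if (2 <=? x)%nat && (x <=? t)%nat then 1 else 0.

Lemma d_split hs x : d hs x = tlI (S (length hs)) x + INR (count_occ Nat.eq_dec hs x).
Proof. unfold d, deg1, tlI. rewrite plus_INR. replace (length hs + 1)%nat with (S (length hs)) by lia.
  destruct ((2 <=? x)%nat && (x <=? S (length hs))%nat); simpl; ring. Qed.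

Lemma sm_seq1 t f : (1 <= t)%nat -> sm (seq 1 t) f = f 1%nat + sm (seq 2 (t-1)) f.
Proof. intros Ht. destruct t; [lia|]. simpl. rewrite Nat.sub_0_r. reflexivity. Qed.

Lemma sm_tl t f : (1 <= t)%nat -> sm (seq 1 t) (fun x => tlI t x * f x) = sm (seq 2 (t-1)) f.
Proof.
  intros Ht. rewrite sm_seq1 by auto. unfold tlI at 1. simpl. rewrite Rmult_0_l, Rplus_0_l.
  apply sm_ext. intros x Hx. apply in_seq in Hx. unfold tlI.
  replace ((2 <=? x)%nat && (x <=? t)%nat) with true. ring.
  symmetry. apply andb_true_intro; split; apply Nat.leb_le; lia.
Qed.

Lemma sm_map2 (h : nat -> nat) l f : sm (map h l) f = sm l (fun x => f (h x)).
Proof. induction l; simpl map; auto. rewrite !sm_cons, IHl. reflexivity. Qed.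

Lemma sm_nthseq (hs : list nat) g : sm (seq 2 (length hs)) (fun i => g (nth (i - 2) hs 0%nat)) = sm hs g.
Proof. rewrite <- sm_map2. rewrite map_nth_shift. reflexivity. Qed.

Lemma Tk_formula beta t hs f : (1 <= t)%nat -> valid t hs ->
  Tk beta t hs f = sm (seq 1 t) (fun x => (beta + d hs x) / Dt beta t * f (hs ++ [x])).
Proof.
  intros Ht [Hl Hf]. unfold Tk.
  assert (Hmap : sm (seq 2 (t - 1)) (fun i => 1 / Dt beta t * f (hs ++ [nth (i - 2) hs 0%nat]))
     = sm hs (fun y => 1 / Dt beta t * f (hs ++ [y]))).
  { rewrite <- Hl. exact (sm_nthseq hs (fun y => 1 / Dt beta t * f (hs ++ [y]))). }
  rewrite Hmap. rewrite (sm_count hs (seq 1 t)).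
  2: apply seq_NoDup.
  2: { intros y Hy. rewrite Forall_forall in Hf. apply Hf in Hy. apply in_seq; lia. }
  rewrite <- (sm_tl t (fun i => 1 / Dt beta t * f (hs ++ [i]))) by auto.
  rewrite <- !sm_plus. apply sm_ext. intros x Hx. rewrite d_split.
  replace (S (length hs)) with t by lia. unfold Rdiv. ring.
Qed.


Definition blk (m x : nat) : nat := ((x - 1) / m)%nat.
Definition Sb (m x y : nat) : R := if Nat.eqb (blk m x) (blk m y) then 1 else 0.

Lemma div_iff m t b : (0 < m)%nat -> ((t / m)%nat = b <-> (b * m <= t < b * m + m)%nat).
Proof.
  intros Hm. split.
  - intros <-. pose proof (Nat.div_mod t m ltac:(lia)). pose proof (Nat.mod_upper_bound t m ltac:(lia)). lia.
  - intros H. symmetry. apply (Nat.div_unique t m b (t - b * m)); lia.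
Qed.

Lemma mod_eq m t : (0 < m)%nat -> (t mod m = t - (t/m)*m)%nat.
Proof. intros Hm. pose proof (Nat.div_mod t m ltac:(lia)). lia. Qed.

Lemma cnt_lemma m t b : (0 < m)%nat ->
  sm (seq 1 t) (fun y => if Nat.eqb (blk m y) b then 1 else 0) = INR (Nat.min t (b*m+m) - Nat.min t (b*m)).
Proof.
  intros Hm. induction t as [|t IH].
  - simpl. unfold sm; simpl. reflexivity.
  - rewrite seq_S, sm_app, IH. rewrite sm_cons. unfold sm at 1; simpl fold_right.
    unfold blk. replace (1 + t - 1)%nat with t by lia.
    destruct (Nat.eqb_spec (t / m) b) as [E|E].
    + apply div_iff in E; auto. rewrite Rplus_0_r. rewrite <- S_INR. f_equal. lia.
    + assert (~ (b * m <= t < b * m + m)%nat) by (intro H; apply E; apply div_iff; auto).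
      rewrite Rplus_0_r, Rplus_0_r. f_equal. lia.
Qed.

Lemma Sb_sym m x y : Sb m x y = Sb m y x.
Proof. unfold Sb. rewrite Nat.eqb_sym. reflexivity. Qed.
Lemma Sb_refl m x : Sb m x x = 1.
Proof. unfold Sb. rewrite Nat.eqb_refl. reflexivity. Qed.

Lemma blk_S m t : blk m (S t) = (t / m)%nat.
Proof. unfold blk. f_equal. lia. Qed.

Lemma s_lemma m t x : (0 < m)%nat -> (1 <= x <= t)%nat ->
  sm (seq 1 t) (fun y => Sb m x y) = INR m - (INR m - INR (t mod m)) * Sb m x (S t).
Proof.
  intros Hm Hx. unfold Sb at 1.
  rewrite (sm_ext _ _ (fun y => if Nat.eqb (blk m y) (blk m x) then 1 else 0)).
  2: { intros y _. rewrite Nat.eqb_sym. reflexivity. }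
  rewrite cnt_lemma by auto. unfold Sb. rewrite blk_S.
  pose proof (Nat.div_mod (x-1) m ltac:(lia)) as E1. pose proof (Nat.mod_upper_bound (x-1) m ltac:(lia)).
  unfold blk. rewrite mod_eq by auto.
  destruct (Nat.eqb_spec ((x - 1) / m) (t / m)) as [E|E].
  - pose proof (proj1 (div_iff m t _ Hm) (eq_sym E)).
    replace (Nat.min t ((x - 1) / m * m + m) - Nat.min t ((x - 1) / m * m))%nat with (t - t/m*m)%nat.
    ring. rewrite <- E. lia.
  - assert (~ ((x - 1) / m * m <= t < (x - 1) / m * m + m)%nat).
    { intro HH. apply E. symmetry. apply div_iff; auto. }
    replace (Nat.min t ((x - 1) / m * m + m) - Nat.min t ((x - 1) / m * m))%nat with m by lia. ring.
Qed.

Lemma r_lemma m t : (0 < m)%nat -> sm (seq 1 t) (fun x => Sb m x (S t)) = INR (t mod m).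
Proof.
  intros Hm. unfold Sb. rewrite blk_S. rewrite cnt_lemma by auto.
  pose proof (proj1 (div_iff m t _ Hm) eq_refl). rewrite mod_eq by auto. f_equal. lia.
Qed.

Lemma blk_succ m t : (0 < m)%nat -> ((S t) mod m <> 0)%nat -> blk m (S (S t)) = blk m (S t).
Proof.
  intros Hm H. rewrite !blk_S. pose proof (proj1 (div_iff m t _ Hm) eq_refl).
  apply div_iff; auto. rewrite mod_eq in H by auto.
  pose proof (proj1 (div_iff m (S t) _ Hm) eq_refl).
  destruct (Nat.eq_dec (S t) (t / m * m + m)); [|lia].
  exfalso. apply H. assert ((S t / m)%nat = S (t/m)) by (apply div_iff; auto; lia). rewrite H2. lia.
Qed.

Lemma Sb_zero m t x : (0 < m)%nat -> (t mod m = 0)%nat -> (1 <= x <= t)%nat -> Sb m x (S t) = 0.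
Proof.
  intros Hm H Hx. unfold Sb. rewrite blk_S. unfold blk.
  rewrite mod_eq in H by auto. pose proof (proj1 (div_iff m t _ Hm) eq_refl).
  destruct (Nat.eqb_spec ((x - 1) / m) (t / m)) as [E|E]; auto.
  apply div_iff in E; auto. lia.
Qed.

Lemma Sb_one_ge2 m t x : (0 < m)%nat -> (m <= t)%nat -> (1 <= x <= t)%nat -> Sb m x (S t) <> 0 -> (2 <= x)%nat.
Proof.
  intros Hm Ht Hx H. destruct (Nat.eq_dec x 1); [|lia]. subst. exfalso. apply H.
  unfold Sb. rewrite blk_S. unfold blk. simpl. rewrite Nat.Div0.div_0_l.
  destruct (Nat.eqb_spec 0 (t / m)) as [E|E]; [|rewrite Nat.sub_0_r; destruct (Nat.eqb_spec 0 (t/m)); [contradiction|reflexivity]]. symmetry in E. apply div_iff in E; auto. lia.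
Qed.

Lemma mod_succ m t : (0 < m)%nat ->
  ((S t) mod m = if Nat.eqb (t mod m) (m - 1) then 0 else S (t mod m))%nat.
Proof.
  intros Hm. rewrite !mod_eq by auto. pose proof (proj1 (div_iff m t _ Hm) eq_refl).
  destruct (Nat.eqb_spec (t - t / m * m) (m - 1)) as [E|E].
  - assert ((S t / m)%nat = S (t/m)) by (apply div_iff; auto; lia). rewrite H0. lia.
  - assert ((S t / m)%nat = (t/m)%nat) by (apply div_iff; auto; lia). rewrite H0. lia.
Qed.

Lemma blk_block m j y : (0 < m)%nat -> (j * m + 1 <= y < j * m + 1 + m)%nat -> blk m y = j.
Proof. intros Hm Hy. unfold blk. apply div_iff; auto; lia. Qed.

Lemma blk_lt m n x : (0 < m)%nat -> (1 <= x <= n * m)%nat -> (blk m x < n)%nat.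
Proof.
  intros Hm Hx. unfold blk. pose proof (proj1 (div_iff m (x-1) _ Hm) eq_refl).
  destruct (Nat.lt_ge_cases ((x - 1) / m) n); auto.
  assert (n * m <= (x - 1) / m * m)%nat by (apply Nat.mul_le_mono_r; auto). lia.
Qed.


Definition Q (m : nat) (hs : list nat) : R :=
  sm (seq 1 (S (length hs))) (fun x => sm (seq 1 (S (length hs))) (fun y => Sb m x y * (d hs x * d hs y))).
Definition Dz (m : nat) (hs : list nat) (z : nat) : R :=
  sm (seq 1 (S (length hs))) (fun x => Sb m x z * d hs x).
Definition Hh (m : nat) (hs : list nat) : R :=
  sm (seq 1 (S (length hs))) (fun x => Sb m x (S (S (length hs))) * INR (count_occ Nat.eq_dec hs x)).

Lemma sm_last t F : sm (seq 1 (S t)) F = sm (seq 1 t) F + F (S t).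
Proof. rewrite seq_S, sm_app. unfold sm at 2. simpl. replace (S t) with (1 + t)%nat by lia. ring. Qed.

Lemma tl_succ n y : (1 <= n)%nat -> tlI (S n) y = tlI n y + del y (S n).
Proof.
  intros Hn. unfold tlI, del.
  destruct (Nat.eqb_spec y (S n)) as [E|E].
  - subst. replace (2 <=? S n)%nat with true by (symmetry; apply Nat.leb_le; lia).
    rewrite Nat.leb_refl. replace (S n <=? n)%nat with false by (symmetry; apply Nat.leb_gt; lia). simpl; ring.
  - replace (y <=? S n)%nat with (y <=? n)%nat
     by (destruct (Nat.leb_spec y n); destruct (Nat.leb_spec y (S n)); auto; lia). ring.
Qed.

Lemma d_app hs x0 y : d (hs ++ [x0]) y = d hs y + del y (S (S (length hs))) + del y x0.
Proof.
  rewrite !d_split. rewrite length_app. simpl length. rewrite count_occ_app, plus_INR.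
  replace (length hs + 1)%nat with (S (length hs)) by lia.
  rewrite tl_succ by lia.
  assert (INR (count_occ Nat.eq_dec [x0] y) = del y x0).
  { simpl. unfold del. destruct (Nat.eq_dec x0 y); destruct (Nat.eqb_spec y x0); try congruence; simpl; ring. }
  rewrite H. ring.
Qed.

Lemma count_out t hs x : valid t hs -> (t < x)%nat -> count_occ Nat.eq_dec hs x = 0%nat.
Proof.
  intros [_ Hf] Hx. apply count_occ_not_In. intro Hin. rewrite Forall_forall in Hf.
  apply Hf in Hin. lia.
Qed.

Lemma d_out t hs : valid t hs -> (1 <= t)%nat -> d hs (S t) = 0.
Proof.
  intros Hv Ht. rewrite d_split. rewrite (count_out t) by (auto; lia). destruct Hv as [Hl _].
  unfold tlI. replace (S t <=? S (length hs))%nat with false by (symmetry; apply Nat.leb_gt; lia).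
  rewrite andb_false_r. simpl. ring.
Qed.

Lemma deg_sum t hs : valid t hs -> (1 <= t)%nat -> sm (seq 1 t) (d hs) = 2 * (INR t - 1).
Proof.
  intros Hv Ht. destruct Hv as [Hl Hf].
  rewrite (sm_ext _ _ (fun x => tlI t x * 1 + INR (count_occ Nat.eq_dec hs x) * 1)).
  2: { intros x _. rewrite d_split. replace (S (length hs)) with t by lia. ring. }
  rewrite sm_plus, sm_tl by auto. rewrite <- sm_count.
  - rewrite !sm_const, length_seq, Hl, minus_INR by lia. simpl. ring.
  - apply seq_NoDup.
  - intros y Hy. rewrite Forall_forall in Hf. apply Hf in Hy. apply in_seq; lia.
Qed.

Lemma dbl_expand m L f g :
  sm L (fun x => sm L (fun y => Sb m x y * ((f x + g x) * (f y + g y)))) =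
  sm L (fun x => sm L (fun y => Sb m x y * (f x * f y)))
  + 2 * sm L (fun x => f x * sm L (fun y => Sb m x y * g y))
  + sm L (fun x => g x * sm L (fun y => Sb m x y * g y)).
Proof.
  assert (E : sm L (fun x => sm L (fun y => Sb m x y * ((f x + g x) * (f y + g y)))) =
    sm L (fun x => sm L (fun y => Sb m x y * (f x * f y)))
    + sm L (fun x => f x * sm L (fun y => Sb m x y * g y))
    + sm L (fun x => sm L (fun y => Sb m x y * (g x * f y)))
    + sm L (fun x => g x * sm L (fun y => Sb m x y * g y))).
  { rewrite <- !sm_plus. apply sm_ext; intros x _. rewrite <- !sm_scal, <- !sm_plus.
    apply sm_ext; intros y _. ring. }
  rewrite E. rewrite (sm_swap L L (fun x y => Sb m x y * (g x * f y))).
  replace (sm L (fun y => sm L (fun x => Sb m x y * (g x * f y))))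
    with (sm L (fun x => f x * sm L (fun y => Sb m x y * g y))). ring.
  apply sm_ext; intros x _. rewrite <- sm_scal. apply sm_ext; intros y _. rewrite Sb_sym. ring.
Qed.

Lemma Q_app m t hs x0 : valid t hs -> (1 <= t)%nat -> (1 <= x0 <= t)%nat ->
  Q m (hs ++ [x0]) = Q m hs + 2 * Dz m hs (S t) + 2 * Dz m hs x0 + 2 + 2 * Sb m (S t) x0.
Proof.
  intros Hv Ht Hx0. pose proof Hv as [Hl Hf].
  assert (Hlen : S (length (hs ++ [x0])) = S t) by (rewrite length_app; simpl; lia).
  assert (Hlen2 : S (length hs) = t) by lia.
  unfold Q, Dz. rewrite Hlen, Hlen2.
  set (g := fun y => del y (S t) + del y x0).
  assert (Hd : forall y, d (hs ++ [x0]) y = d hs y + g y).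
  { intros y. rewrite d_app. unfold g. rewrite Hlen2. ring. }
  rewrite (sm_ext _ _ (fun x => sm (seq 1 (S t)) (fun y => Sb m x y * ((d hs x + g x) * (d hs y + g y))))).
  2: { intros x _. apply sm_ext; intros y _. rewrite !Hd. reflexivity. }
  rewrite dbl_expand.
  assert (HinS : In (S t) (seq 1 (S t))) by (apply in_seq; lia).
  assert (Hin0 : In x0 (seq 1 (S t))) by (apply in_seq; lia).
  assert (Hg : forall x, sm (seq 1 (S t)) (fun y => Sb m x y * g y) = Sb m x (S t) + Sb m x x0).
  { intros x. unfold g. rewrite (sm_ext _ _ (fun y => del y (S t) * Sb m x y + del y x0 * Sb m x y)).
    2: { intros; ring. }
    rewrite sm_plus, !sm_delta; auto; apply seq_NoDup. }
  rewrite (sm_ext _ (fun x => d hs x * _) (fun x => d hs x * (Sb m x (S t) + Sb m x x0))).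
  2: { intros; rewrite Hg; reflexivity. }
  rewrite (sm_ext _ (fun x => g x * _) (fun x => g x * (Sb m x (S t) + Sb m x x0))).
  2: { intros; rewrite Hg; reflexivity. }
  assert (Hdo : d hs (S t) = 0) by (apply d_out; auto).
  assert (Hgg : sm (seq 1 (S t)) (fun x => g x * (Sb m x (S t) + Sb m x x0)) = 2 + 2 * Sb m (S t) x0).
  { unfold g. rewrite (sm_ext _ _ (fun x => del x (S t) * (Sb m x (S t) + Sb m x x0) + del x x0 * (Sb m x (S t) + Sb m x x0))).
    2: { intros; ring. }
    rewrite sm_plus, !sm_delta; auto; try apply seq_NoDup. rewrite !Sb_refl, (Sb_sym m x0). ring. }
  rewrite Hgg.
  rewrite (sm_ext (seq 1 (S t)) (fun x => sm (seq 1 (S t)) _) (fun x => sm (seq 1 t) (fun y => Sb m x y * (d hs x * d hs y)))).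
  2: { intros; rewrite sm_last, Hdo; ring. }
  rewrite !sm_last. rewrite Hdo.
  rewrite (sm_ext (seq 1 t) (fun y => Sb m (S t) y * (0 * d hs y)) (fun _ => 0)) by (intros; ring).
  rewrite sm_const.
  rewrite (sm_ext (seq 1 t) (fun x => d hs x * _) (fun x => Sb m x (S t) * d hs x + Sb m x x0 * d hs x)).
  2: { intros; ring. }
  rewrite sm_plus. ring.
Qed.


Lemma Dn_eq m t hs : (0 < m)%nat -> (m <= t)%nat -> valid t hs ->
  Dz m hs (S t) = INR (t mod m) + Hh m hs.
Proof.
  intros Hm Ht Hv. pose proof Hv as [Hl Hf]. assert (Hlen : S (length hs) = t) by lia.
  unfold Dz, Hh. rewrite Hlen. rewrite <- (r_lemma m t Hm). rewrite <- sm_plus.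
  apply sm_ext. intros x Hx. apply in_seq in Hx. rewrite d_split, Hlen.
  destruct (Req_dec (Sb m x (S t)) 0) as [E|E]. rewrite E; ring.
  pose proof (Sb_one_ge2 m t x Hm Ht ltac:(lia) E).
  unfold tlI. replace ((2 <=? x)%nat && (x <=? t)%nat) with true. ring.
  symmetry; apply andb_true_intro; split; apply Nat.leb_le; lia.
Qed.

Lemma TQ beta m t hs : 0 < beta -> (0 < m)%nat -> (m <= t)%nat -> valid t hs ->
  Tk beta t hs (Q m) =
    (1 + 2 / Dt beta t) * Q m hs
    + (2 + 2 / Dt beta t * (1 - beta * (INR m - INR (t mod m)))) * Hh m hs
    + (2 * INR (t mod m) + 2 + 2 / Dt beta t * (beta * (2 * INR m * (INR t - 1) - (INR m - INR (t mod m)) * INR (t mod m)) + (beta + 1) * INR (t mod m))).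
Proof.
  intros Hb Hm Ht Hv. assert (Ht1 : (1 <= t)%nat) by lia.
  pose proof Hv as [Hl Hf]. assert (Hlen : S (length hs) = t) by lia.
  pose proof (Dt_pos beta t Hb Ht1) as HD.
  set (D := Dt beta t) in *. set (r := INR (t mod m)).
  rewrite Tk_formula by auto.
  set (Dn := Dz m hs (S t)).
  rewrite (sm_ext _ _ (fun x0 => (Q m hs + 2 * Dn + 2) / D * (beta + d hs x0)
                               + 2 / D * ((beta + d hs x0) * Dz m hs x0)
                               + 2 / D * ((beta + d hs x0) * Sb m (S t) x0))).
  2: { intros x0 Hx0. apply in_seq in Hx0. rewrite (Q_app m t) by (auto; lia). fold Dn. change (Dt beta t) with D. field. lra. }
  rewrite !sm_plus, !sm_scal.
  assert (H1 : sm (seq 1 t) (fun x => beta + d hs x) = D).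
  { rewrite sm_plus, sm_const, length_seq, deg_sum by auto. unfold D, Dt. ring. }
  assert (H2 : sm (seq 1 t) (fun x0 => (beta + d hs x0) * Dz m hs x0)
               = beta * (2 * INR m * (INR t - 1) - (INR m - r) * Dn) + Q m hs).
  { unfold Dz, Q. rewrite Hlen.
    rewrite (sm_ext _ _ (fun x0 => sm (seq 1 t) (fun x => (beta + d hs x0) * (Sb m x x0 * d hs x)))).
    2: { intros; rewrite <- sm_scal; reflexivity. }
    rewrite sm_swap.
    rewrite (sm_ext _ _ (fun x => beta * d hs x * sm (seq 1 t) (fun x0 => Sb m x x0)
                                 + sm (seq 1 t) (fun y => Sb m x y * (d hs x * d hs y)))).
    2: { intros x _. rewrite <- sm_scal, <- sm_plus. apply sm_ext; intros; ring. }
    rewrite sm_plus. f_equal.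
    rewrite (sm_ext _ _ (fun x => beta * INR m * d hs x - beta * (INR m - r) * (Sb m x (S t) * d hs x))).
    2: { intros x Hx. apply in_seq in Hx. rewrite s_lemma by (auto; lia). fold r. ring. }
    unfold Rminus at 1. rewrite sm_plus.
    rewrite (sm_ext _ (fun x => - _) (fun x => (- (beta * (INR m - r))) * (Sb m x (S t) * d hs x))) by (intros; ring).
    rewrite !sm_scal. rewrite deg_sum by auto. unfold Dn, Dz. rewrite Hlen. ring. }
  assert (H3 : sm (seq 1 t) (fun x0 => (beta + d hs x0) * Sb m (S t) x0) = beta * r + Dn).
  { rewrite (sm_ext _ _ (fun x0 => beta * Sb m x0 (S t) + Sb m x0 (S t) * d hs x0)).
    2: { intros; rewrite Sb_sym; ring. }
    rewrite sm_plus, sm_scal, r_lemma by auto. unfold Dn, Dz. rewrite Hlen. reflexivity. }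
  rewrite H1, H2, H3.
  unfold Dn. rewrite (Dn_eq m t) by auto. fold r. field. lra.
Qed.

Lemma Hh_app m t hs x0 : (0 < m)%nat -> valid t hs -> (1 <= t)%nat -> (1 <= x0 <= t)%nat ->
  ((S t) mod m <> 0)%nat -> Hh m (hs ++ [x0]) = Hh m hs + Sb m x0 (S t).
Proof.
  intros Hm Hv Ht Hx0 Hmod. pose proof Hv as [Hl Hf].
  assert (Hlen : S (length (hs ++ [x0])) = S t) by (rewrite length_app; simpl; lia).
  assert (Hlen2 : S (length hs) = t) by lia.
  unfold Hh. rewrite Hlen, Hlen2. rewrite sm_last.
  rewrite count_occ_app. rewrite (count_out t hs (S t)) by (auto; lia).
  simpl count_occ at 2. destruct (Nat.eq_dec x0 (S t)); [lia|]. simpl INR at 2. rewrite Rmult_0_r, Rplus_0_r.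
  assert (Hs : forall x, Sb m x (S (S t)) = Sb m x (S t)).
  { intros x. unfold Sb. rewrite blk_succ; auto. }
  rewrite (sm_ext _ _ (fun x => Sb m x (S t) * INR (count_occ Nat.eq_dec hs x) + del x x0 * Sb m x (S t))).
  2: { intros x _. rewrite Hs, count_occ_app, plus_INR. simpl count_occ.
       unfold del. destruct (Nat.eq_dec x0 x); destruct (Nat.eqb_spec x x0); try congruence; simpl; ring. }
  rewrite sm_plus, sm_delta; auto. apply seq_NoDup. apply in_seq; lia.
Qed.

Lemma TH beta m t hs : 0 < beta -> (0 < m)%nat -> (m <= t)%nat -> valid t hs -> ((S t) mod m <> 0)%nat ->
  Tk beta t hs (Hh m) = (1 + 1 / Dt beta t) * Hh m hs + (beta + 1) * INR (t mod m) / Dt beta t.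
Proof.
  intros Hb Hm Ht Hv Hmod. assert (Ht1 : (1 <= t)%nat) by lia.
  pose proof Hv as [Hl Hf]. assert (Hlen : S (length hs) = t) by lia.
  pose proof (Dt_pos beta t Hb Ht1) as HD.
  rewrite Tk_formula by auto.
  rewrite (sm_ext _ _ (fun x0 => Hh m hs / Dt beta t * (beta + d hs x0) + 1 / Dt beta t * ((beta + d hs x0) * Sb m x0 (S t)))).
  2: { intros x0 Hx0. apply in_seq in Hx0. rewrite (Hh_app m t) by (auto; lia). field. lra. }
  rewrite sm_plus, !sm_scal.
  assert (H1 : sm (seq 1 t) (fun x => beta + d hs x) = Dt beta t).
  { rewrite sm_plus, sm_const, length_seq, deg_sum by auto. unfold Dt. ring. }
  rewrite H1.
  rewrite (sm_ext _ (fun x0 => _ * Sb m x0 (S t)) (fun x0 => beta * Sb m x0 (S t) + Sb m x0 (S t) * d hs x0)) by (intros; ring).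
  rewrite sm_plus, sm_scal, r_lemma by auto.
  replace (sm (seq 1 t) (fun x0 => Sb m x0 (S t) * d hs x0)) with (Dz m hs (S t)) by (unfold Dz; rewrite Hlen; reflexivity).
  rewrite (Dn_eq m t) by auto. field. lra.
Qed.

Lemma Hh_zero m t hs : (0 < m)%nat -> (1 <= t)%nat -> valid t hs -> (t mod m = 0)%nat -> Hh m hs = 0.
Proof.
  intros Hm Ht [Hl Hf] Hmod. unfold Hh. assert (Hlen : S (length hs) = t) by lia.
  rewrite Hlen. rewrite (sm_ext _ _ (fun _ => 0)). rewrite sm_const; ring.
  intros x Hx. apply in_seq in Hx. rewrite Sb_zero; auto; [ring|lia].
Qed.


Definition qs beta m t := Ex (Defs.dist beta t) (Q m).
Definition hq beta m t := Ex (Defs.dist beta t) (Hh m).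

Lemma q_rec beta m t : 0 < beta -> (0 < m)%nat -> (m <= t)%nat ->
  qs beta m (S t) =
    (1 + 2 / Dt beta t) * qs beta m t
    + (2 + 2 / Dt beta t * (1 - beta * (INR m - INR (t mod m)))) * hq beta m t
    + (2 * INR (t mod m) + 2 + 2 / Dt beta t * (beta * (2 * INR m * (INR t - 1) - (INR m - INR (t mod m)) * INR (t mod m)) + (beta + 1) * INR (t mod m))).
Proof.
  intros Hb Hm Ht. unfold qs, hq. rewrite dist_step by lia.
  rewrite (Ex_ext _ _ (fun hs => (1 + 2 / Dt beta t) * Q m hs
    + (2 + 2 / Dt beta t * (1 - beta * (INR m - INR (t mod m)))) * Hh m hs
    + (2 * INR (t mod m) + 2 + 2 / Dt beta t * (beta * (2 * INR m * (INR t - 1) - (INR m - INR (t mod m)) * INR (t mod m)) + (beta + 1) * INR (t mod m))))).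
  2: { intros p Hp. rewrite TQ; auto. apply (dist_valid beta); auto; lia. }
  rewrite Ex_lin, dist_weight by (auto; lia). ring.
Qed.

Lemma h_rec beta m t : 0 < beta -> (0 < m)%nat -> (m <= t)%nat -> ((S t) mod m <> 0)%nat ->
  hq beta m (S t) = (1 + 1 / Dt beta t) * hq beta m t + (beta + 1) * INR (t mod m) / Dt beta t.
Proof.
  intros Hb Hm Ht Hmod. unfold hq. rewrite dist_step by lia.
  rewrite (Ex_ext _ _ (fun hs => (1 + 1 / Dt beta t) * Hh m hs + 0 * Hh m hs + (beta + 1) * INR (t mod m) / Dt beta t)).
  2: { intros p Hp. rewrite TH; auto. ring. apply (dist_valid beta); auto; lia. }
  rewrite Ex_lin, dist_weight by (auto; lia). ring.
Qed.

Lemma h_zero beta m t : 0 < beta -> (0 < m)%nat -> (1 <= t)%nat -> (t mod m = 0)%nat -> hq beta m t = 0.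
Proof.
  intros Hb Hm Ht Hmod. unfold hq.
  rewrite (Ex_ext _ _ (fun hs => 0 * Hh m hs + 0 * Hh m hs + 0)).
  2: { intros p Hp. rewrite (Hh_zero m t); auto. ring. apply (dist_valid beta); auto. }
  rewrite Ex_lin. ring.
Qed.

Lemma block_sum m F n : (0 < m)%nat ->
  sm (seq 1 (n * m)) F = sm (seq 1 n) (fun j => sm (seq ((j - 1) * m + 1) m) F).
Proof.
  intros Hm. induction n as [|n IH]. reflexivity.
  replace (S n * m)%nat with (n * m + m)%nat by lia. rewrite seq_app, sm_app, IH.
  rewrite seq_S, sm_app. rewrite (sm_cons _ [] ). replace (sm [] _) with 0 by reflexivity. rewrite Rplus_0_r. f_equal.
  f_equal. f_equal. lia.
Qed.

Lemma block_dbl m F n : (0 < m)%nat ->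
  sm (seq 1 (n * m)) (fun x => sm (seq 1 (n * m)) (fun y => Sb m x y * (F x * F y)))
  = sm (seq 1 n) (fun j => sm (seq ((j - 1) * m + 1) m) F * sm (seq ((j - 1) * m + 1) m) F).
Proof.
  intros Hm. induction n as [|n IH]. reflexivity.
  replace (S n * m)%nat with (n * m + m)%nat by lia. rewrite !seq_app.
  rewrite seq_S, (sm_app (seq 1 n)). rewrite (sm_cons _ [] ). replace (sm [] _) with 0 by reflexivity. rewrite Rplus_0_r.
  replace ((1 + n - 1) * m + 1)%nat with (1 + n * m)%nat by lia.
  rewrite <- IH. rewrite sm_app.
  rewrite (sm_ext (seq 1 (n*m)) _ (fun x => sm (seq 1 (n * m)) (fun y => Sb m x y * (F x * F y)))).
  2: { intros x Hx. apply in_seq in Hx. rewrite sm_app.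
       rewrite (sm_ext (seq (1 + n * m) m) _ (fun _ => 0)). rewrite sm_const; ring.
       intros y Hy. apply in_seq in Hy. unfold Sb.
       rewrite (blk_block m n y) by (auto; lia).
       pose proof (blk_lt m n x Hm ltac:(lia)).
       destruct (Nat.eqb_spec (blk m x) n); [lia|ring]. }
  f_equal.
  rewrite (sm_ext (seq (1 + n * m) m) _ (fun x => F x * sm (seq (1 + n * m) m) F)).
  2: { intros x Hx. apply in_seq in Hx. rewrite sm_app.
       rewrite (sm_ext (seq 1 (n * m)) _ (fun _ => 0)).
       2: { intros y Hy. apply in_seq in Hy. unfold Sb.
            rewrite (blk_block m n x) by (auto; lia).
            pose proof (blk_lt m n y Hm ltac:(lia)).
            destruct (Nat.eqb_spec n (blk m y)); [lia|ring]. }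
       rewrite sm_const, Rmult_0_r, Rplus_0_l. rewrite <- sm_scal. apply sm_ext.
       intros y Hy. apply in_seq in Hy. unfold Sb.
       rewrite (blk_block m n x) by (auto; lia). rewrite (blk_block m n y) by (auto; lia).
       rewrite Nat.eqb_refl. ring. }
  rewrite (sm_ext _ _ (fun x => sm (seq (1 + n * m) m) F * F x)) by (intros; ring).
  rewrite sm_scal. reflexivity.
Qed.

Lemma binom2_INR dd : INR (binom2 dd) = (INR dd * INR dd - INR dd) / 2.
Proof.
  unfold binom2. assert (exists k, (dd * (dd - 1) = 2 * k)%nat) as [k Hk].
  { induction dd as [|d' IH]. exists 0%nat; lia. destruct IH as [k Hk].
    exists (k + d')%nat. destruct d'; simpl in *; nia. }
  rewrite Hk. rewrite (Nat.mul_comm 2 k), Nat.div_mul by lia.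
  assert (INR (dd * (dd - 1)) = INR dd * INR dd - INR dd).
  { destruct dd. simpl; ring. rewrite mult_INR, minus_INR by lia. simpl (INR 1). ring. }
  rewrite Hk in H. rewrite mult_INR in H. simpl (INR 2) in H. lra.
Qed.

Lemma pair_id m n hs : (0 < m)%nat -> (1 <= n)%nat -> valid (n * m) hs ->
  INR (pair_count m n hs) = (Q m hs - 2 * (INR (n * m) - 1)) / 2.
Proof.
  intros Hm Hn Hv. pose proof Hv as [Hl Hf]. assert (Hlen : S (length hs) = (n * m)%nat) by nia.
  unfold pair_count. rewrite INR_fold.
  rewrite (sm_ext _ _ (fun j => (sm (seq ((j - 1) * m + 1) m) (d hs) * sm (seq ((j - 1) * m + 1) m) (d hs)
                               - sm (seq ((j - 1) * m + 1) m) (d hs)) / 2)).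
  2: { intros j _. rewrite binom2_INR. unfold degm. rewrite INR_fold. reflexivity. }
  unfold Rdiv. rewrite (sm_ext _ _ (fun j => / 2 * (sm (seq ((j - 1) * m + 1) m) (d hs) * sm (seq ((j - 1) * m + 1) m) (d hs)) + (- / 2) * sm (seq ((j - 1) * m + 1) m) (d hs))) by (intros; ring).
  rewrite sm_plus, !sm_scal. rewrite <- block_dbl, <- block_sum by auto.
  rewrite deg_sum by (auto; nia). unfold Q. rewrite Hlen. ring.
Qed.


Lemma mod_small_add k m j : (j < m)%nat -> ((k * m + j) mod m = j)%nat.
Proof. intros H. rewrite Nat.add_comm, Nat.Div0.mod_add. apply Nat.mod_small; auto. Qed.

Lemma Dt_ge beta t : 0 < beta -> (2 <= t)%nat -> INR t <= Dt beta t.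
Proof. intros Hb Ht. unfold Dt. apply le_INR in Ht. simpl in Ht. nra. Qed.

Lemma h_bound beta m (h : nat -> R) : 0 < beta -> (0 < m)%nat ->
  (forall t, (1 <= t)%nat -> (t mod m = 0)%nat -> h t = 0) ->
  (forall t, (m <= t)%nat -> ((S t) mod m <> 0)%nat ->
      h (S t) = (1 + 1 / Dt beta t) * h t + (beta + 1) * INR (t mod m) / Dt beta t) ->
  exists K, 0 <= K /\ forall t, (2 * m <= t)%nat -> 0 <= h t /\ h t <= K / INR t.
Proof.
  intros Hb Hm Hz Hr.
  set (K4 := 2 * (beta + 1) * INR m).
  assert (Hmpos : 0 < INR m) by (apply lt_0_INR; lia).
  assert (Claim : forall k j, (2 <= k)%nat -> (j < m)%nat ->
            0 <= h (k * m + j)%nat /\ h (k * m + j)%nat * INR (k * m) <= INR j * K4).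
  { intros k j Hk. induction j as [|j IH]; intros Hj.
    - rewrite Nat.add_0_r, Hz. split; [lra| simpl; lra]. nia. apply Nat.Div0.mod_mul.
    - specialize (IH ltac:(lia)). destruct IH as [H0 H1].
      set (t := (k * m + j)%nat) in *.
      replace (k * m + S j)%nat with (S t) by (unfold t; lia).
      assert (Hmod : (S t mod m <> 0)%nat).
      { unfold t. replace (S (k * m + j)) with (k * m + S j)%nat by lia. rewrite mod_small_add; lia. }
      rewrite Hr; [|unfold t; nia|exact Hmod].
      assert (Htm : (t mod m = j)%nat) by (unfold t; apply mod_small_add; lia).
      rewrite Htm.
      set (M := INR (k * m)).
      assert (HM2 : 2 * INR m <= M) by (unfold M; rewrite mult_INR; apply le_INR in Hk; simpl in Hk; nra).
      assert (HtM : M <= INR t) by (unfold M, t; apply le_INR; lia).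
      assert (HD : INR t <= Dt beta t) by (apply Dt_ge; auto; unfold t; nia).
      assert (HDp : 0 < Dt beta t) by lra.
      set (D := Dt beta t) in *.
      assert (Hj' : INR j <= INR m) by (apply le_INR; lia).
      assert (Hj0 : 0 <= INR j) by apply pos_INR.
      assert (Hx : h t <= K4 / 2).
      { apply Rmult_le_reg_r with M; [lra|]. unfold K4 in *.
        apply Rle_trans with (INR j * (2 * (beta + 1) * INR m)); auto.
        replace (2 * (beta + 1) * INR m / 2 * M) with ((beta + 1) * INR m * M) by field.
        assert (0 <= (beta + 1) * INR m * (M - 2 * INR j)) by (apply Rmult_le_pos; nra). nra. }
      assert (Hsum : h t + (beta + 1) * INR j <= K4) by (assert ((beta+1)*INR j <= (beta+1)*INR m) by (apply Rmult_le_compat_l; lra); unfold K4 in *; lra).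
      assert (HMD : M / D <= 1) by (apply Rmult_le_reg_r with D; [lra|]; unfold Rdiv; rewrite Rmult_assoc, Rinv_l; lra).
      assert (HMD0 : 0 <= M / D) by (unfold Rdiv; apply Rmult_le_pos; [lra| left; apply Rinv_0_lt_compat; lra]).
      split.
      + assert (0 <= (h t + (beta + 1) * INR j) / D) by (unfold Rdiv; apply Rmult_le_pos; [nra| left; apply Rinv_0_lt_compat; lra]).
        replace ((1 + 1 / D) * h t + (beta + 1) * INR j / D) with (h t + (h t + (beta + 1) * INR j) / D) by (field; lra). lra.
      + replace (((1 + 1 / D) * h t + (beta + 1) * INR j / D) * M) with (h t * M + (h t + (beta + 1) * INR j) * (M / D)) by (field; lra).
        rewrite S_INR.
        assert ((h t + (beta + 1) * INR j) * (M / D) <= K4 * 1).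
        { apply Rmult_le_compat; try lra. nra. }
        change (INR (k * m)) with M in H1. lra. }
  exists (2 * INR m * K4). split. unfold K4. assert (0 <= INR m) by apply pos_INR. nra.
  intros t Ht.
  set (k := (t / m)%nat). set (j := (t mod m)%nat).
  assert (Htkj : t = (k * m + j)%nat) by (unfold k, j; pose proof (Nat.div_mod t m ltac:(lia)); lia).
  assert (Hk : (2 <= k)%nat).
  { unfold k. apply Nat.div_le_lower_bound; lia. }
  assert (Hj : (j < m)%nat) by (unfold j; apply Nat.mod_upper_bound; lia).
  destruct (Claim k j Hk Hj) as [H0 H1]. rewrite <- Htkj in H0, H1.
  split; auto.
  assert (HtM : INR t <= 2 * INR (k * m)).
  { rewrite Htkj. rewrite plus_INR. assert (INR j <= INR (k * m)). apply le_INR. nia. lra. }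
  assert (Htpos : 0 < INR t) by (apply lt_0_INR; lia).
  assert (Hj' : INR j <= INR m) by (apply le_INR; lia).
  apply Rmult_le_reg_r with (INR t); auto. unfold Rdiv. rewrite Rmult_assoc, Rinv_l by lra.
  assert (0 <= K4) by (unfold K4; nra).
  nra.
Qed.


Lemma ln_lower u : 0 < u -> u / (1 + u) <= ln (1 + u).
Proof.
  intros Hu. set (v := / (1 + u)).
  assert (Hv : 0 < v) by (unfold v; apply Rinv_0_lt_compat; lra).
  assert (H1 : 1 + ln v <= v) by (rewrite <- (exp_ln v) at 2 by auto; apply exp_ineq1_le).
  unfold v in H1. rewrite ln_Rinv in H1 by lra.
  replace (u / (1 + u)) with (1 - / (1 + u)) by (field; lra). lra.
Qed.

Lemma key_ineq c y : 0 < c < 1 -> 1 <= y ->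
  Rpower y c * (1 + c / (y + 2 - c)) <= Rpower (y + 1) c.
Proof.
  intros Hc Hy.
  replace (y + 1) with (y * (1 + / y)) by (field; lra).
  rewrite <- Rpower_mult_distr by (try lra; assert (0 < / y) by (apply Rinv_0_lt_compat; lra); lra).
  assert (Hp : 0 < Rpower y c) by (unfold Rpower; apply exp_pos).
  apply Rmult_le_compat_l; [lra|].
  unfold Rpower at 1. apply Rle_trans with (1 + c * ln (1 + / y)); [|apply exp_ineq1_le].
  assert (Hiy : 0 < / y) by (apply Rinv_0_lt_compat; lra).
  pose proof (ln_lower (/ y) Hiy) as HL.
  replace (/ y / (1 + / y)) with (1 / (y + 1)) in HL by (field; lra).
  assert (c / (y + 2 - c) <= c * (1 / (y + 1))).
  { unfold Rdiv. rewrite Rmult_1_l. apply Rmult_le_compat_l; [lra|]. apply Rinv_le_contravar; lra. }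
  assert (c * (1 / (y + 1)) <= c * ln (1 + / y)) by (apply Rmult_le_compat_l; lra).
  lra.
Qed.

Lemma e_bound beta (e : nat -> R) T0 K : 0 < beta -> (3 <= T0)%nat -> 0 <= K ->
  (forall t, (T0 <= t)%nat -> Rabs (e (S t) - (1 + 2 / Dt beta t) * e t) <= K / INR t) ->
  exists C, 0 <= C /\ forall t, (T0 <= t)%nat -> Rabs (e t) <= C * Rpower (INR t) (2 / (2 + beta)).
Proof.
  intros Hb HT0 HK Hrec.
  set (c := 2 / (2 + beta)).
  assert (Hc : 0 < c < 1) by (unfold c; split; [apply Rdiv_lt_0_compat; lra| apply Rmult_lt_reg_r with (2 + beta); [lra|]; unfold Rdiv; rewrite Rmult_assoc, Rinv_l; lra]).
  set (B := K * (2 + beta) / 2).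
  assert (HB : 0 <= B) by (unfold B; assert (0 <= K * (2 + beta)) by nra; lra).
  assert (HT0r : 3 <= INR T0) by (apply le_INR in HT0; simpl in HT0; lra).
  set (P0 := Rpower (INR T0 - 2) c).
  assert (HP0 : 0 < P0) by (unfold P0, Rpower; apply exp_pos).
  set (C := (Rabs (e T0) + B) / P0).
  assert (HC : 0 <= C) by (unfold C; unfold Rdiv; apply Rmult_le_pos; [pose proof (Rabs_pos (e T0)); lra | left; apply Rinv_0_lt_compat; lra]).
  assert (Main : forall t, (T0 <= t)%nat -> Rabs (e t) <= C * Rpower (INR t - 2) c - B).
  { intros t Ht. induction Ht as [|t Ht IH].
    - unfold C. fold P0. field_simplify; lra.
    - assert (Htr : 3 <= INR t) by (apply le_INR in Ht; lra).
      assert (HD : 0 < Dt beta t) by (apply Dt_pos; auto; lia).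
      assert (HDt : Dt beta t <= (2 + beta) * INR t) by (unfold Dt; lra).
      assert (H2D : 2 / Dt beta t = c / (INR t - 2 + 2 - c)).
      { unfold c. replace (INR t - 2 + 2 - 2 / (2 + beta)) with (((2 + beta) * INR t - 2) / (2 + beta)) by (field; lra).
        unfold Dt in *. field. split; lra. }
      pose proof (key_ineq c (INR t - 2) Hc ltac:(lra)) as Hkey.
      replace (INR t - 2 + 1) with (INR (S t) - 2) in Hkey by (rewrite S_INR; ring).
      rewrite <- H2D in Hkey.
      specialize (Hrec t Ht).
      assert (Hpos : 0 < 1 + 2 / Dt beta t) by (assert (0 < 2 / Dt beta t) by (apply Rdiv_lt_0_compat; lra); lra).
      assert (Habs : Rabs (e (S t)) <= Rabs (e t) * (1 + 2 / Dt beta t) + K / INR t).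
      { pose proof (Rabs_triang (e (S t) - (1 + 2 / Dt beta t) * e t) ((1 + 2 / Dt beta t) * e t)).
        replace (e (S t) - (1 + 2 / Dt beta t) * e t + (1 + 2 / Dt beta t) * e t) with (e (S t)) in H by ring.
        rewrite Rabs_mult, (Rabs_right (1 + 2 / Dt beta t)) in H by lra. lra. }
      assert (HKB : K / INR t <= B * (2 / Dt beta t)).
      { unfold B. unfold Rdiv. apply Rmult_le_reg_r with (INR t * Dt beta t); [nra|].
        replace (K * / INR t * (INR t * Dt beta t)) with (K * Dt beta t) by (field; lra).
        replace (K * (2 + beta) * / 2 * (2 * / Dt beta t) * (INR t * Dt beta t)) with (K * ((2 + beta) * INR t)) by (field; lra).
        apply Rmult_le_compat_l; lra. }
      assert (Hm1 : Rabs (e t) * (1 + 2 / Dt beta t) <= (C * Rpower (INR t - 2) c - B) * (1 + 2 / Dt beta t))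
        by (apply Rmult_le_compat_r; lra).
      assert (Hm2 : C * (Rpower (INR t - 2) c * (1 + 2 / Dt beta t)) <= C * Rpower (INR (S t) - 2) c)
        by (apply Rmult_le_compat_l; lra).
      nra. }
  exists C. split; auto. intros t Ht. specialize (Main t Ht).
  assert (Htr : 3 <= INR t) by (apply le_INR in Ht; lra).
  assert (Rpower (INR t - 2) c <= Rpower (INR t) c) by (apply Rle_Rpower_l; lra).
  assert (C * Rpower (INR t - 2) c <= C * Rpower (INR t) c) by (apply Rmult_le_compat_l; lra).
  fold c. lra.
Qed.


Definition Acoef (beta : R) (m : nat) : R := (2 + beta + INR m * (2 + 5 * beta)) / beta.
Definition gg (beta : R) (m : nat) (x : R) : R :=
  Acoef beta m * (2 / (2 + beta)) + 2 + 2 * x + 4 * INR m * beta / (2 + beta) - Acoef beta m.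
Definition phi (beta : R) (m t : nat) : R := sm (seq 0 (t mod m)) (fun j => gg beta m (INR j)).

Lemma sum_seq0 n : sm (seq 0 n) INR = INR n * (INR n - 1) / 2.
Proof.
  induction n as [|n IH]. unfold sm; simpl; field.
  rewrite seq_S, sm_app, IH. rewrite (sm_cons _ []). replace (sm [] INR) with 0 by reflexivity.
  simpl (0 + n)%nat. rewrite S_INR. field.
Qed.

Lemma gg_sum beta m : 0 < beta -> (0 < m)%nat -> sm (seq 0 m) (fun j => gg beta m (INR j)) = 0.
Proof.
  intros Hb Hm. unfold gg.
  rewrite (sm_ext _ _ (fun j => (Acoef beta m * (2 / (2 + beta)) + 2 + 4 * INR m * beta / (2 + beta) - Acoef beta m) + 2 * INR j)) by (intros; ring).
  rewrite sm_plus, sm_const, sm_scal, sum_seq0, length_seq. unfold Acoef. field. lra.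
Qed.

Lemma phi_rec beta m t : 0 < beta -> (0 < m)%nat -> phi beta m (S t) = phi beta m t + gg beta m (INR (t mod m)).
Proof.
  intros Hb Hm. unfold phi. rewrite mod_succ by auto.
  pose proof (Nat.mod_upper_bound t m ltac:(lia)).
  destruct (Nat.eqb_spec (t mod m) (m - 1)) as [E|E].
  - rewrite E. transitivity 0. reflexivity. rewrite <- (gg_sum beta m) by auto.
    replace (seq 0 m) with (seq 0 (S (m - 1))) by (f_equal; lia).
    rewrite seq_S, sm_app, (sm_cons _ []). replace (sm [] _) with 0 by reflexivity. simpl (0 + (m-1))%nat.
    ring.
  - rewrite seq_S, sm_app, (sm_cons _ []). replace (sm [] _) with 0 by reflexivity. simpl (0 + t mod m)%nat. ring.
Qed.

Lemma sm_abs_bound l f G : (forall x, In x l -> Rabs (f x) <= G) -> Rabs (sm l f) <= INR (length l) * G.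
Proof.
  induction l as [|a l IH]; intros H. unfold sm; simpl; rewrite Rabs_R0; lra.
  rewrite sm_cons. change (length (a :: l)) with (S (length l)). rewrite S_INR.
  eapply Rle_trans. apply Rabs_triang. assert (Rabs (f a) <= G) by (apply H; left; auto).
  assert (Rabs (sm l f) <= INR (length l) * G) by (apply IH; intros; apply H; right; auto). lra.
Qed.

Lemma phi_bound beta m : 0 < beta -> (0 < m)%nat -> exists P, 0 <= P /\ forall t, Rabs (phi beta m t) <= P.
Proof.
  intros Hb Hm.
  set (G0 := Rabs (Acoef beta m * (2 / (2 + beta)) + 2 + 4 * INR m * beta / (2 + beta) - Acoef beta m) + 2 * INR m).
  assert (HG0 : 0 <= G0) by (unfold G0; pose proof (Rabs_pos (Acoef beta m * (2 / (2 + beta)) + 2 + 4 * INR m * beta / (2 + beta) - Acoef beta m)); pose proof (pos_INR m); lra).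
  exists (INR m * G0). split. pose proof (pos_INR m); nra.
  intros t. unfold phi. eapply Rle_trans. apply (sm_abs_bound _ _ G0).
  - intros j Hj. apply in_seq in Hj. unfold gg.
    pose proof (Nat.mod_upper_bound t m ltac:(lia)).
    assert (INR j <= INR m) by (apply le_INR; lia). pose proof (pos_INR j).
    replace (Acoef beta m * (2 / (2 + beta)) + 2 + 2 * INR j + 4 * INR m * beta / (2 + beta) - Acoef beta m)
      with ((Acoef beta m * (2 / (2 + beta)) + 2 + 4 * INR m * beta / (2 + beta) - Acoef beta m) + 2 * INR j) by ring.
    eapply Rle_trans. apply Rabs_triang. rewrite (Rabs_right (2 * INR j)) by lra. unfold G0. lra.
  - rewrite length_seq. apply Rmult_le_compat_r; auto. apply le_INR.
    pose proof (Nat.mod_upper_bound t m ltac:(lia)); lia.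
Qed.

Definition ee beta m t := qs beta m t - Acoef beta m * INR t - phi beta m t.

Lemma eps_bound beta m : 0 < beta -> (0 < m)%nat ->
  exists K, 0 <= K /\ forall t, (Nat.max (2 * m) 3 <= t)%nat ->
    Rabs (ee beta m (S t) - (1 + 2 / Dt beta t) * ee beta m t) <= K / INR t.
Proof.
  intros Hb Hm.
  destruct (h_bound beta m (hq beta m) Hb Hm) as [Kh [HKh Hh]].
  { intros t Ht Hmod. apply h_zero; auto. }
  { intros t Ht Hmod. apply h_rec; auto. }
  destruct (phi_bound beta m Hb Hm) as [P [HP HPb]].
  set (Z := (4 * Acoef beta m - 4 * INR m * beta * beta) / (2 + beta)).
  set (MY := (1 + beta * INR m) * Kh + beta * INR m * INR m + (beta + 1) * INR m + P).
  exists (2 * Kh + 2 * MY + Rabs Z). split.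
  { unfold MY. pose proof (Rabs_pos Z). pose proof (pos_INR m).
    assert (0 <= beta * INR m) by nra. assert (0 <= (1 + beta * INR m) * Kh) by nra.
    assert (0 <= beta * INR m * INR m) by nra. nra. }
  intros t Ht.
  assert (Htm : (m <= t)%nat) by lia.
  assert (Ht3 : 3 <= INR t) by (apply le_INR in Ht; assert (INR 3 <= INR (Nat.max (2*m) 3)) by (apply le_INR; lia); simpl in *; lra).
  assert (HD : 0 < Dt beta t) by (apply Dt_pos; auto; lia).
  assert (HDt : INR t <= Dt beta t) by (apply Dt_ge; auto; lia).
  destruct (Hh t ltac:(lia)) as [Hh0 Hh1].
  set (h := hq beta m t) in *.
  set (r := INR (t mod m)).
  assert (Hr0 : 0 <= r) by apply pos_INR.
  assert (Hrm : r <= INR m) by (apply le_INR; pose proof (Nat.mod_upper_bound t m ltac:(lia)); lia).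
  set (Y := (1 - beta * (INR m - r)) * h - beta * (INR m - r) * r + (beta + 1) * r + phi beta m t).
  assert (Heq : ee beta m (S t) - (1 + 2 / Dt beta t) * ee beta m t = 2 * h + 2 / Dt beta t * Y + Z / Dt beta t).
  { unfold ee. rewrite q_rec by auto. rewrite phi_rec by auto. fold h r. unfold Y, Z, gg, Dt in *.
    rewrite S_INR. field. lra. }
  rewrite Heq.
  assert (HhK : h <= Kh) by (apply Rle_trans with (Kh / INR t); auto; unfold Rdiv;
     rewrite <- (Rmult_1_r Kh) at 2; apply Rmult_le_compat_l; auto; rewrite <- Rinv_1; apply Rinv_le_contravar; lra).
  assert (HY : Rabs Y <= MY).
  { unfold Y, MY. pose proof (HPb t). pose proof (Rle_abs (phi beta m t)).
    pose proof (Rle_abs (- phi beta m t)) as Hn. rewrite Rabs_Ropp in Hn.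
    assert (Hu : 0 <= INR m - r <= INR m) by lra.
    assert (H1 : 0 <= (INR m - r) * h <= INR m * Kh) by (split; [nra|apply Rmult_le_compat; lra]).
    assert (H2 : 0 <= (INR m - r) * r <= INR m * INR m) by (split; [nra|apply Rmult_le_compat; lra]).
    assert (H3 : beta * ((INR m - r) * h) <= beta * (INR m * Kh)) by (apply Rmult_le_compat_l; lra).
    assert (H4 : beta * ((INR m - r) * r) <= beta * (INR m * INR m)) by (apply Rmult_le_compat_l; lra).
    assert (H5 : 0 <= beta * ((INR m - r) * h)) by nra.
    assert (H6 : 0 <= beta * ((INR m - r) * r)) by nra.
    assert (H7 : (beta + 1) * r <= (beta + 1) * INR m) by (apply Rmult_le_compat_l; lra).
    assert (H8 : 0 <= (beta + 1) * r) by nra.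
    apply Rabs_le. split; nra. }
  assert (Hinv : / Dt beta t <= / INR t) by (apply Rinv_le_contravar; lra).
  assert (Hip : 0 < / Dt beta t) by (apply Rinv_0_lt_compat; lra).
  eapply Rle_trans. apply Rabs_triang. eapply Rle_trans. apply Rplus_le_compat_r. apply Rabs_triang.
  rewrite Rabs_right by lra. unfold Rdiv. rewrite !Rabs_mult.
  rewrite (Rabs_right 2) by lra. rewrite (Rabs_right (/ Dt beta t)) by lra.
  assert (2 * h <= 2 * Kh * / INR t) by (unfold Rdiv in Hh1; lra).
  assert (2 * / Dt beta t * Rabs Y <= 2 * MY * / INR t).
  { assert (0 <= MY) by (pose proof (Rabs_pos Y); lra). 
    apply Rle_trans with (2 * / INR t * MY); [|lra]. apply Rmult_le_compat; try nra. pose proof (Rabs_pos Y); lra. }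
  assert (Rabs Z * / Dt beta t <= Rabs Z * / INR t) by (apply Rmult_le_compat_l; [apply Rabs_pos|lra]).
  lra.
Qed.


Lemma Rpower_ge1 x c : 1 <= x -> 0 <= c -> 1 <= Rpower x c.
Proof.
  intros Hx Hc. replace 1 with (Rpower 1 c) at 1.
  apply Rle_Rpower_l; lra. unfold Rpower. rewrite ln_1, Rmult_0_r, exp_0. reflexivity.
Qed.

Theorem proposition4 (beta : R) (m : nat) (hbeta : 0 < beta) (hm : (0 < m)%nat) :
  exists (C : R) (N0 : nat), forall n : nat, (N0 <= n)%nat ->
    Rabs (expected_pairs beta m n
          - ((2 + 5 * beta) / (2 * beta) * INR m ^ 2
             + (2 - beta) / (2 * beta) * INR m) * INR n)
    <= C * Rpower (INR n) (2 / (2 + beta)).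
Proof.
  destruct (eps_bound beta m hbeta hm) as [K [HK Hrec]].
  destruct (e_bound beta (ee beta m) (Nat.max (2 * m) 3) K hbeta ltac:(lia) HK Hrec) as [C0 [HC0 He]].
  set (c := 2 / (2 + beta)) in *.
  assert (Hc : 0 <= c) by (unfold c; left; apply Rdiv_lt_0_compat; lra).
  assert (Hmr : 1 <= INR m) by (apply (le_INR 1); lia).
  set (Pm := Rpower (INR m) c).
  assert (HPm : 0 < Pm) by (unfold Pm, Rpower; apply exp_pos).
  exists (C0 * Pm / 2 + 1), (Nat.max (2 * m) 3). intros n Hn.
  assert (Hn1 : (1 <= n)%nat) by lia.
  assert (Hnr : 1 <= INR n) by (apply (le_INR 1); lia).
  assert (Htn : (Nat.max (2 * m) 3 <= n * m)%nat) by nia.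
  assert (HEP : expected_pairs beta m n = (qs beta m (n * m) - 2 * (INR (n * m) - 1)) / 2).
  { change (expected_pairs beta m n) with (Ex (Defs.dist beta (n * m)) (fun hs => INR (pair_count m n hs))).
    unfold qs.
    rewrite (Ex_ext _ _ (fun hs => / 2 * Q m hs + 0 * Q m hs + (- (INR (n * m) - 1)))).
    2: { intros p Hp. rewrite pair_id; auto. field. apply (dist_valid beta); auto; nia. }
    rewrite Ex_lin, dist_weight by (auto; nia). field. }
  assert (Hphi : phi beta m (n * m) = 0) by (unfold phi; rewrite Nat.Div0.mod_mul; reflexivity).
  assert (Hq : qs beta m (n * m) = ee beta m (n * m) + Acoef beta m * INR (n * m)) by (unfold ee; rewrite Hphi; ring).
  rewrite HEP, Hq.
  replace ((ee beta m (n * m) + Acoef beta m * INR (n * m) - 2 * (INR (n * m) - 1)) / 2 -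
      ((2 + 5 * beta) / (2 * beta) * INR m ^ 2 + (2 - beta) / (2 * beta) * INR m) * INR n)
    with (ee beta m (n * m) / 2 + 1) by (unfold Acoef; rewrite mult_INR; field; lra).
  specialize (He (n * m)%nat Htn).
  rewrite mult_INR in He. rewrite <- Rpower_mult_distr in He by lra. fold c Pm in He.
  set (Pn := Rpower (INR n) c) in *.
  assert (HPn : 1 <= Pn) by (apply Rpower_ge1; auto).
  eapply Rle_trans. apply Rabs_triang. rewrite (Rabs_right 1) by lra.
  unfold Rdiv. rewrite Rabs_mult, (Rabs_right (/ 2)) by lra.
  assert (C0 * (Pn * Pm) = (C0 * Pm) * Pn) by ring.
  assert (HH : (C0 * Pm * / 2 + 1) * Pn = C0 * (Pn * Pm) * / 2 + Pn) by ring.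
  rewrite HH. lra.
Qed.
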